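(* The CrossEntropySurrogate $L_{CE}$ is not a realizable $(\mathcal M,\mathcal R)$-consistent surrogate for $L^{0-1}_{\mathrm{def}}$: there exist a data distribution, a human expert, and a class of scoring functions closed under scaling for which the induced class contains a pair $(m^*,r^* )$ with $L^{0-1}_{\mathrm{def}}(m^*,r^* )=0$, but the conclusion of realizable $(\mathcal M,\mathcal R)$-consistency fails for $L_{CE}$.
   Context: Labels $\mathcal Y=\{1,\dots,C\}$, human expert prediction $h\in\mathcal Y$. A scoring function $\mathbf g=(g_1,\dots,g_{|\mathcal Y|},g_\bot)$ induces $m(x)=\arg\max_{y\in\mathcal Y}g_y(x)$ and $r(x)=\mathbb{I}\{g_\bot(x)>\max_{y}g_y(x)\}$ ($r=1$ means defer). A class $\mathcal G$ is closed under scaling if $\mathbf g\in\mathcal G\Rightarrow\alpha\mathbf g\in\mathcal G$ for all $\alpha\in\mathbb R$. $L^{0-1}_{\mathrm{def}}(m,r)=\mathbb{P}[((1-r(X))m(X)+r(X)h(Z))\neq Y]$. The CrossEntropySurrogate is the expectation of the pointwise loss $L_{CE}(\mathbf g,x,y,h)=-\log\frac{\exp(g_y(x))}{\sum_{y'\in\mathcal Y\cup\{\bot\}}\exp(g_{y'}(x))}-\mathbb{I}_{h=y}\log\frac{\exp(g_\bot(x))}{\sum_{y'\in\mathcal Y\cup\{\bot\}}\exp(g_{y'}(x))}$. A surrogate $\tilde L$ is realizable $(\mathcal M,\mathcal R)$-consistent for $L^{0-1}_{\mathrm{def}}$ if, whenever some $(m^*,r^* )\in\mathcal M\times\mathcal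 R$ has $L^{0-1}_{\mathrm{def}}(m^*,r^* )=0$, every minimizer of $\tilde L$ over $\mathcal M\times\mathcal R$ has zero $L^{0-1}_{\mathrm{def}}$. *)

(* Defs.v *)
From mathcomp Require Import all_boot all_order all_algebra.
From mathcomp Require Import reals.
From mathcomp Require Import sequences exp.
Set Implicit Arguments. Unset Strict Implicit. Unset Printing Implicit Defensive.
Import Order.TTheory GRing.Theory Num.Theory.
Local Open Scope ring_scope.

Section Defer.
Variables (R : realType) (n : nat) (X Z : finType).
(* Labels Y = {1,...,C} with C = n.+1, encoded as 'I_n.+1 (label k+1 <-> k). *)
Notation lab := 'I_n.+1.

(* Scoring function g = (g_1,...,g_C, g_bot): label scores and the bot score. *)
Definition scorer := ((X -> lab -> R) * (X -> R))%type.

Definition scale (a : R) (g : scorer) : scorer :=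
  (fun x y => a * g.1 x y, fun x => a * g.2 x).

Definition closed_under_scaling (G : scorer -> Prop) : Prop :=
  forall (a : R) (g : scorer), G g -> G (scale a g).

Definition mof (g : scorer) (x : X) : lab := [arg max_(i > ord0) g.1 x i]%O.
Definition rof (g : scorer) (x : X) : bool := [forall y, g.1 x y < g.2 x].

Definition Mclass (G : scorer -> Prop) (m : X -> lab) : Prop :=
  exists g, G g /\ m = mof g.
Definition Rclass (G : scorer -> Prop) (r : X -> bool) : Prop :=
  exists g, G g /\ r = rof g.

Definition is_distr (P : {ffun X * Z * lab -> R}) : Prop :=
  (forall t, 0 <= P t) /\ \sum_t P t = 1.

Definition Ldef (P : {ffun X * Z * lab -> R}) (h : Z -> lab)
    (m : X -> lab) (r : X -> bool) : R :=
  \sum_t P t * ((if r t.1.1 then h t.1.2 else m t.1.1) != t.2)%:R.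

Definition LCE_pt (g : scorer) (x : X) (y hz : lab) : R :=
  let S := \sum_(y' : lab) expR (g.1 x y') + expR (g.2 x) in
  - ln (expR (g.1 x y) / S) - (hz == y)%:R * ln (expR (g.2 x) / S).

Definition LCE (P : {ffun X * Z * lab -> R}) (h : Z -> lab) (g : scorer) : R :=
  \sum_t P t * LCE_pt g t.1.1 t.2 (h t.1.2).

Definition realizable_consistent (Ls : scorer -> R)
    (P : {ffun X * Z * lab -> R}) (h : Z -> lab) (G : scorer -> Prop) : Prop :=
  (exists m r, Mclass G m /\ Rclass G r /\ Ldef P h m r = 0) ->
  forall g, G g -> (forall g', G g' -> Ls g <= Ls g') ->
    Ldef P h (mof g) (rof g) = 0.
End Defer.

(* Main.v *)
Require Import Defs.
From mathcomp Require Import all_boot all_order all_algebra.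
From mathcomp Require Import reals.
From mathcomp Require Import sequences exp.
From mathcomp Require Import ring lra.
Import Order.TTheory GRing.Theory Num.Theory.
Local Open Scope ring_scope.

Lemma sum_delta (R : realType) (T : finType) (a : T) (F : T -> R) :
  \sum_t (t == a)%:R * F t = F a.
Proof.
rewrite (bigD1 a) //= eqxx mul1r big1 ?addr0 // => t /negbTE ->.
by rewrite mul0r.
Qed.

Lemma expR_lb (R : realType) (u m : R) : expR m * (1 + u - m) <= expR u.
Proof.
have -> : expR u = expR m * expR (u - m) by rewrite -expRD addrC subrK.
rewrite ler_pM2l ?expR_gt0 // -addrA; exact: expR_ge1Dx.
Qed.

Lemma S_lb (R : realType) (n : nat) (v : 'I_n.+1 -> R) (b : R) :
  (n%:R + 2) * expR ((\sum_y v y + b) / (n%:R + 2)) <= \sum_y expR (v y) + expR b.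
Proof.
set N := (n%:R + 2 : R); set m := (_ / N).
have hN : 0 < N by rewrite /N; apply: ltr_wpDl => //.
have h1 : \sum_y expR m * (1 + v y - m) <= \sum_y expR (v y).
  by apply: ler_sum => y _; exact: expR_lb.
have h2 := @expR_lb R b m.
have e : \sum_y expR m * (1 + v y - m) + expR m * (1 + b - m) = N * expR m.
  rewrite -big_distrr /= -mulrDr mulrC; congr (_ * _).
  rewrite !big_split /= sumr_const card_ord sumrN sumr_const card_ord.
  idtac.
  rewrite /m /N; field; rewrite gt_eqF //.
rewrite -e; exact: lerD.
Qed.

Lemma LCE_pt_eq (R : realType) (n : nat) (X : finType) (g : scorer R n X) x y hz :
  LCE_pt g x y hz = (1 + (hz == y)%:R) * ln (\sum_y' expR (g.1 x y') + expR (g.2 x))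
     - g.1 x y - (hz == y)%:R * g.2 x.
Proof.
rewrite /LCE_pt /=; set S := (\sum_y' expR (g.1 x y') + expR (g.2 x)).
have hS : 0 < S by rewrite /S ltr_wpDl ?expR_gt0 ?sumr_ge0 // => i _; exact/ltW/expR_gt0.
rewrite !lnM ?posrE ?invr_gt0 ?expR_gt0 // !lnV ?posrE // !expRK; ring.
Qed.

Lemma LCE_pt_lb (R : realType) (n : nat) (X : finType) (g : scorer R n X) x y hz :
  (1 + (hz == y)%:R) * (ln (n%:R + 2) + (\sum_y' g.1 x y' + g.2 x) / (n%:R + 2))
     - g.1 x y - (hz == y)%:R * g.2 x <= LCE_pt g x y hz.
Proof.
rewrite LCE_pt_eq lerD2r lerD2r ler_wpM2l ?addr_ge0 ?ler0n //.
have hN : (0 : R) < n%:R + 2 by apply: ltr_wpDl.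
set mu := (_ / (n%:R + 2)).
have -> : ln (n%:R + 2) + mu = ln ((n%:R + 2) * expR mu)
  by rewrite lnM ?posrE ?expR_gt0 // expRK.
rewrite ler_ln ?posrE ?mulr_gt0 ?expR_gt0 //.
  exact: S_lb.
by rewrite ltr_wpDl ?expR_gt0 ?sumr_ge0 // => i _; exact/ltW/expR_gt0.
Qed.

Lemma sum2 (R : realType) (T : finType) (t1 t2 : T) (F : T -> R) :
  \sum_t ((t == t1)%:R + (t == t2)%:R) / 2 * F t = (F t1 + F t2) / 2.
Proof.
under eq_bigr do rewrite !mulrDl !(mulrAC _ 2^-1) -!mulrA.
rewrite big_split /= !sum_delta mulrDl.
by [].
Qed.

Theorem theorem6 (R : realType) (n : nat) (hn : (0 < n)%N) :
  exists (X Z : finType) (P : {ffun X * Z * 'I_n.+1 -> R})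
         (h : Z -> 'I_n.+1) (G : scorer R n X -> Prop),
    is_distr P /\ closed_under_scaling G /\
    (exists m r, Mclass G m /\ Rclass G r /\ Ldef P h m r = 0) /\
    ~ realizable_consistent (LCE P h) P h G.
Proof.
pose y1 : 'I_n.+1 := Ordinal (hn : (1 < n.+1)%N).
have y10 : y1 != ord0 by [].
pose t1 : bool * unit * 'I_n.+1 := (true, tt, y1).
pose t2 : bool * unit * 'I_n.+1 := (false, tt, ord0).
pose P : {ffun bool * unit * 'I_n.+1 -> R} :=
  [ffun t => ((t == t1)%:R + (t == t2)%:R) / 2].
have sumP (F : bool * unit * 'I_n.+1 -> R) : \sum_t P t * F t = (F t1 + F t2) / 2.
  by under eq_bigr do rewrite ffunE; rewrite sum2.
pose h := fun _ : unit => (ord0 : 'I_n.+1).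
pose g1 : scorer R n bool :=
  (fun x y => if x then (y == y1)%:R * n%:R else (y == ord0)%:R * (-(n%:R + 2)),
   fun x => if x then 0 else 1).
pose G := fun g : scorer R n bool => exists a : R,
  (forall x y, g.1 x y = a * g1.1 x y) /\ (forall x, g.2 x = a * g1.2 x).
have hG1 : G g1 by exists 1; split => *; rewrite mul1r.
pose g0 : scorer R n bool := (fun _ _ => 0, fun _ => 0).
have hG0 : G g0 by exists 0; split => *; rewrite mul0r.
have nR : (0 : R) < n%:R by rewrite ltr0n.
have hN : (0 : R) < n%:R + 2 by apply: ltr_wpDl => //; exact: ltW.
have m1 : mof g1 true = y1.
  rewrite /mof; case: arg_maxP => // i _ Hi.
  apply/eqP; apply/negPn/negP => ne.
  have := Hi y1 isT; rewrite /g1 /= (negbTE ne) mul0r mul1r.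
  by rewrite leNgt nR.
have r1t : rof g1 true = false.
  by apply/negbTE/forallPn; exists y1; rewrite /g1 /= ?eqxx mul1r -leNgt ltW.
have r1f : rof g1 false = true.
  apply/forallP => y; rewrite /g1 /=; case: (y == ord0); rewrite ?mul1r ?mul0r ?ltr01 //; lra.
have L1 : Ldef P h (mof g1) (rof g1) = 0.
  by rewrite /Ldef sumP /= r1t r1f m1 /h eqxx /= addr0 mul0r.
exists bool, unit, P, h, G; split; [|split; [|split]].
- split; first by move=> t; rewrite ffunE divr_ge0 ?addr_ge0 ?ler0n.
  rewrite (eq_bigr (fun t => P t * 1)); last by move=> t _; rewrite mulr1.
  rewrite sumP; lra.
- move=> b g [a [Ha1 Ha2]]; exists (b * a); split => * /=;
  by rewrite ?Ha1 ?Ha2 mulrA.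
- by exists (mof g1), (rof g1); split; [exists g1|split; [exists g1|]].
move=> /(_ (ex_intro _ (mof g1) (ex_intro _ (rof g1)
   (conj (ex_intro _ g1 (conj hG1 erefl)) (conj (ex_intro _ g1 (conj hG1 erefl)) L1))))).
move=> /(_ g0 hG0) H.
have : Ldef P h (mof g0) (rof g0) = 0.
  apply: H => g' [a [Ha1 Ha2]].
  have s1 : \sum_y g'.1 true y = a * n%:R.
    under eq_bigr do rewrite Ha1 /g1 /= mulrCA.
    exact: (@sum_delta _ _ y1 (fun _ => a * n%:R)).
  have s2 : \sum_y g'.1 false y = a * - (n%:R + 2).
    under eq_bigr do rewrite Ha1 /g1 /= mulrCA.
    exact: (@sum_delta _ _ ord0 (fun _ => a * - (n%:R + 2))).
  have A := @LCE_pt_lb _ _ _ g' true y1 ord0.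
  have B := @LCE_pt_lb _ _ _ g' false ord0 ord0.
  rewrite s1 s2 !Ha1 !Ha2 /g1 /= in A B.
  rewrite /LCE !sumP /= (@LCE_pt_eq _ _ _ g0 true) (@LCE_pt_eq _ _ _ g0 false) /= expR0 sumr_const card_ord.
  have -> : (1 *+ n.+1 + 1 : R) = n%:R + 2 by rewrite mulrSr -addrA.
  have NZ : (n%:R + 2 : R) != 0 by rewrite gt_eqF.
  have k1 : (a * n%:R + a * 0) / (n%:R + 2) = a - 2 * (a / (n%:R + 2)) by field.
  have k2 : (a * - (n%:R + 2) + a * 1) / (n%:R + 2) = - a + a / (n%:R + 2) by field.
  rewrite k1 k2 in A B.
  lra.
have r0 : forall x, rof g0 x = false.
  by move=> x; apply/negbTE/forallPn; exists ord0; rewrite /= ltxx.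
rewrite /Ldef sumP /= !r0.
have -> : mof g0 false = mof g0 true by [].
set m := mof g0 true => e.
have e' : (m != y1)%:R + (m != ord0)%:R = (0 : R) by lra.
case: (eqVneq m ord0) e' => [->|ne]; first by rewrite eq_sym y10 /=; lra.
by rewrite /=; have := ler0n R (m != y1); lra.
Qed.
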